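(* Let $\mathcal{S}$ be a sound and refutationally complete saturation system and $T$ a theory. Then $\mathcal{S}+\mathrm{IND}^R$ refutes $\mathit{CNF}(\mathit{sk}^\exists(T))$ if and only if the theory $\mathrm{SI}^\omega(\mathit{sk}^\exists(T))$ is inconsistent.
   Context: Classical first-order logic with equality; Skolem symbols $\mathfrak{s}_{Qx\varphi}$ (one new function symbol of arity $|\mathrm{FV}(Qx\varphi)|$ for each formula $Qx\varphi$, $Q\in\{\forall,\exists\}$), iterated languages $\mathit{sk}^\omega(L)$, and Skolemization maps $\mathit{sk}^\exists,\mathit{sk}^\forall$ defined by: $\mathit{sk}^Q$ fixes atoms, commutes with $\wedge,\vee$, $\mathit{sk}^Q(\neg A)=\neg\mathit{sk}^{\overline Q}(A)$, $\mathit{sk}^Q(QxA(x,\vec y))=\mathit{sk}^Q(A(\mathfrak{s}_{QxA}(\vec y),\vec y))$ with $\vec y$ exactly the free variables of $QxA$, $\mathit{sk}^Q(\overline QxA)=\overline Qx\,\mathit{sk}^Q(A)$ ($\overline\forall=\exists$, $\overline\exists=\forall$), applied elementwise to theories. Induction: $I_x\varphi=\forall\vec z(\varphi(0,\vec z)\wedge\forall x(\varphi(x,\vec z)\to\varphi(s(x),\vec z))\to\forall x\varphi(x,\vec z))$; $\mathrm{IND}(\Gamma)=\{I_x\gamma:\gamma\in\Gamma\}$. The Skolem induction operator: $\mathrm{SI}(T)=T+\mathit{sk}^\exists(\mathrm{IND}(\mathcal{F}(L(T))))$, where $\mathcal{F}(L(T))$ is the set of all $L(T)$ formulas; $\mathrm{SI}^i$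 is its $i$-fold iteration and $\mathrm{SI}^\omega(T)=\bigcup_i\mathrm{SI}^i(T)$. Saturation systems: sets of rules $\mathcal{C}/\mathcal{D}$ ($\mathcal{C}$ clause set, $\mathcal{D}$ finite clause set); deductions $\mathcal{D}_0,\dots,\mathcal{D}_n$ with $\mathcal{D}_{i+1}=\mathcal{D}_i\cup\mathcal{B}_i$ for a rule $\mathcal{D}_i/\mathcal{B}_i$; refutation if the empty clause is in $\mathcal{D}_n$. Sound: derivable clauses $C$ from $\mathcal{C}_0$ satisfy $L(C)\subseteq L(\mathcal{C}_0)$ and $\mathcal{C}_0\models C$; refutationally complete: every inconsistent clause set has a refutation. $\mathit{CNF}$ maps universal sentences (and sets thereof) to clause sets. $\mathrm{IND}^R$ is the set of rules $\mathcal{C}/\mathit{CNF}(\mathit{sk}^\exists(I_x\varphi))$ for every clause set $\mathcal{C}$ and every formula $\varphi(x,\vec z)$ over the symbols of $\mathcal{C}$. *)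

(* Defs.v *)
From Stdlib Require Import List Arith.
Import ListNotations.
Set Implicit Arguments.

Record sig := { Fs : Type; Ps : Type; zero_sym : Fs; succ_sym : Fs }.

(* Terms, function symbols and formulas (mutually, since a Skolem symbol
   is indexed by a formula  Q x phi, stored as the whole formula). *)
Inductive term (S : sig) : Type :=
| var : nat -> term S
| app : fsym S -> list (term S) -> term S
with fsym (S : sig) : Type :=
| base : Fs S -> fsym S
| skf : form S -> fsym S
with form (S : sig) : Type :=
| atom : Ps S -> list (term S) -> form S
| eqf : term S -> term S -> form S
| neg : form S -> form S
| conj : form S -> form S -> form S
| disj : form S -> form S -> form S
| all : form S -> form S
| ex : form S -> form S.

Arguments var {S} n.
Arguments app {S} f ts.
Arguments base {S} f.
Arguments skf {S} A.
Arguments atom {S} p ts.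
Arguments eqf {S} t u.
Arguments neg {S} A.
Arguments conj {S} A B.
Arguments disj {S} A B.
Arguments all {S} A.
Arguments ex {S} A.

Definition imp {S : sig} (A B : form S) : form S := disj (neg A) B.

Definition up_ren (r : nat -> nat) (n : nat) : nat :=
  match n with 0 => 0 | Datatypes.S m => Datatypes.S (r m) end.

Fixpoint rename_t {S : sig} (r : nat -> nat) (t : term S) : term S :=
  match t with
  | var n => var (r n)
  | app f ts => app f (map (rename_t r) ts)
  end.

Definition scons {A : Type} (a : A) (s : nat -> A) (n : nat) : A :=
  match n with 0 => a | Datatypes.S m => s m end.

Definition up_sub {S : sig} (s : nat -> term S) : nat -> term S :=
  scons (var 0) (fun m => rename_t Datatypes.S (s m)).

Fixpoint subst_t {S : sig} (s : nat -> term S) (t : term S) : term S :=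
  match t with
  | var n => s n
  | app f ts => app f (map (subst_t s) ts)
  end.

Fixpoint subst_f {S : sig} (s : nat -> term S) (A : form S) : form S :=
  match A with
  | atom p ts => atom p (map (subst_t s) ts)
  | eqf t u => eqf (subst_t s t) (subst_t s u)
  | neg A => neg (subst_f s A)
  | conj A B => conj (subst_f s A) (subst_f s B)
  | disj A B => disj (subst_f s A) (subst_f s B)
  | all A => all (subst_f (up_sub s) A)
  | ex A => ex (subst_f (up_sub s) A)
  end.

Fixpoint free_in_t {S : sig} (n : nat) (t : term S) : bool :=
  match t with
  | var m => Nat.eqb n m
  | app _ ts => existsb (free_in_t n) ts
  end.

Fixpoint free_in_f {S : sig} (n : nat) (A : form S) : bool :=
  match A with
  | atom _ ts => existsb (free_in_t n) ts
  | eqf t u => free_in_t n t || free_in_t n u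
  | neg A => free_in_f n A
  | conj A B | disj A B => free_in_f n A || free_in_f n B
  | all A | ex A => free_in_f (Datatypes.S n) A
  end.

Fixpoint bound_t {S : sig} (t : term S) : nat :=
  match t with
  | var m => Datatypes.S m
  | app _ ts => fold_right Nat.max 0 (map bound_t ts)
  end.

Fixpoint bound_f {S : sig} (A : form S) : nat :=
  match A with
  | atom _ ts => fold_right Nat.max 0 (map bound_t ts)
  | eqf t u => Nat.max (bound_t t) (bound_t u)
  | neg A => bound_f A
  | conj A B | disj A B => Nat.max (bound_f A) (bound_f B)
  | all A | ex A => Nat.pred (bound_f A)
  end.

Definition fv {S : sig} (A : form S) : list nat :=
  filter (fun n => free_in_f n A) (seq 0 (bound_f A)).

Definition sentence {S : sig} (A : form S) : Prop := bound_f A = 0.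

Definition skterm {S : sig} (QA : form S) : term S :=
  app (skf QA) (map var (fv QA)).

(* ---------- Skolemization  sk^Q.
   q = true  : sk^exists ;  q = false : sk^forall.
   sk q s A  computes  sk^Q (A[s])  (pending substitution s), which makes
   the recursion structural:
     sk^Q(QxA(x,y))  = sk^Q(A(s_{QxA}(y), y))
     sk^Q(Q'xA)      = Q'x sk^Q(A)   (Q' the dual quantifier)
     sk^Q(~A)        = ~ sk^{dual Q}(A)
   The Skolem symbol is indexed by the actual formula (QxA)[s]. *)
Fixpoint sk {S : sig} (q : bool) (s : nat -> term S) (A : form S) : form S :=
  match A with
  | atom p ts => atom p (map (subst_t s) ts)
  | eqf t u => eqf (subst_t s t) (subst_t s u)
  | neg A => neg (sk (negb q) s A)
  | conj A B => conj (sk q s A) (sk q s B)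
  | disj A B => disj (sk q s A) (sk q s B)
  | all A =>
      if q then all (sk q (up_sub s) A)
      else sk q (scons (skterm (subst_f s (all A))) s) A
  | ex A =>
      if q then sk q (scons (skterm (subst_f s (ex A))) s) A
      else ex (sk q (up_sub s) A)
  end.

Definition skE {S : sig} (A : form S) : form S := sk true var A.
Definition skA {S : sig} (A : form S) : form S := sk false var A.

Definition theory (S : sig) := form S -> Prop.

Definition skE_th {S : sig} (T : theory S) : theory S :=
  fun A => exists B, T B /\ A = skE B.

Record structure (S : sig) := {
  dom : Type;
  dom_inh : dom;
  ifun : fsym S -> list dom -> dom;
  ipred : Ps S -> list dom -> Prop }.

Fixpoint eval {S : sig} (M : structure S) (r : nat -> dom M) (t : term S)
  : dom M :=
  match t with
  | var n => r n
  | app f ts => ifun M f (map (eval M r) ts)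
  end.

Fixpoint sat {S : sig} (M : structure S) (r : nat -> dom M) (A : form S)
  : Prop :=
  match A with
  | atom p ts => ipred M p (map (eval M r) ts)
  | eqf t u => eval M r t = eval M r u
  | neg A => ~ sat M r A
  | conj A B => sat M r A /\ sat M r B
  | disj A B => sat M r A \/ sat M r B
  | all A => forall d, sat M (scons d r) A
  | ex A => exists d, sat M (scons d r) A
  end.

Definition model {S : sig} (M : structure S) (T : theory S) : Prop :=
  forall A, T A -> forall r, sat M r A.

Definition inconsistent {S : sig} (T : theory S) : Prop :=
  forall M : structure S, ~ model M T.

Inductive symbol (S : sig) := SF (f : fsym S) | SP (p : Ps S).
Arguments SF {S} f.
Arguments SP {S} p.

Fixpoint syms_t {S : sig} (t : term S) : list (symbol S) :=
  match t with
  | var _ => []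
  | app f ts => SF f :: flat_map syms_t ts
  end.

Fixpoint syms_f {S : sig} (A : form S) : list (symbol S) :=
  match A with
  | atom p ts => SP p :: flat_map syms_t ts
  | eqf t u => syms_t t ++ syms_t u
  | neg A => syms_f A
  | conj A B | disj A B => syms_f A ++ syms_f B
  | all A | ex A => syms_f A
  end.

Definition language (S : sig) := symbol S -> Prop.

Definition lang_th {S : sig} (T : theory S) : language S :=
  fun s => exists A, T A /\ In s (syms_f A).

Definition over {S : sig} (L : language S) (A : form S) : Prop :=
  forall s, In s (syms_f A) -> L s.

Definition zero_t {S : sig} : term S := app (base (zero_sym S)) [].
Definition succ_t {S : sig} (t : term S) : term S := app (base (succ_sym S)) [t].

(* I_x phi, with x the de Bruijn index 0 of phi and z its other free
   variables (universally closed):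
   forall z (phi(0,z) /\ forall x (phi(x,z) -> phi(s x,z)) -> forall x phi(x,z)) *)
Definition ind_body {S : sig} (phi : form S) : form S :=
  imp (conj (subst_f (scons zero_t var) phi)
            (all (imp phi (subst_f (scons (succ_t (var 0))
                                          (fun n => var (Datatypes.S n))) phi))))
      (all phi).

Definition ind {S : sig} (phi : form S) : form S :=
  Nat.iter (bound_f (ind_body phi)) (@all S) (ind_body phi).

Definition SI {S : sig} (T : theory S) : theory S :=
  fun A => T A \/ exists phi, over (lang_th T) phi /\ A = skE (ind phi).

Definition SIn {S : sig} (n : nat) (T : theory S) : theory S := Nat.iter n SI T.

Definition SIw {S : sig} (T : theory S) : theory S :=
  fun A => exists n, SIn n T A.

Inductive atomic (S : sig) :=
| APred : Ps S -> list (term S) -> atomic S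
| AEq : term S -> term S -> atomic S.
Arguments APred {S} p ts.
Arguments AEq {S} t u.

Definition literal (S : sig) := (bool * atomic S)%type.  (* true = positive *)
Definition clause (S : sig) := list (literal S).
Definition clause_set (S : sig) := clause S -> Prop.

Definition sat_atomic {S : sig} (M : structure S) (r : nat -> dom M)
  (a : atomic S) : Prop :=
  match a with
  | APred p ts => ipred M p (map (eval M r) ts)
  | AEq t u => eval M r t = eval M r u
  end.

Definition sat_lit {S : sig} (M : structure S) (r : nat -> dom M)
  (l : literal S) : Prop :=
  if fst l then sat_atomic M r (snd l) else ~ sat_atomic M r (snd l).

Definition sat_clause {S : sig} (M : structure S) (C : clause S) : Prop :=
  forall r, exists l, In l C /\ sat_lit M r l.

Definition cs_model {S : sig} (M : structure S) (D : clause_set S) : Prop :=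
  forall C, D C -> sat_clause M C.

Definition cs_unsat {S : sig} (D : clause_set S) : Prop :=
  forall M : structure S, ~ cs_model M D.

Definition entails {S : sig} (D : clause_set S) (C : clause S) : Prop :=
  forall M : structure S, cs_model M D -> sat_clause M C.

Definition syms_atomic {S : sig} (a : atomic S) : list (symbol S) :=
  match a with
  | APred p ts => SP p :: flat_map syms_t ts
  | AEq t u => syms_t t ++ syms_t u
  end.

Definition syms_clause {S : sig} (C : clause S) : list (symbol S) :=
  flat_map (fun l => syms_atomic (snd l)) C.

Definition lang_cs {S : sig} (D : clause_set S) : language S :=
  fun s => exists C, D C /\ In s (syms_clause C).

(* ---------- CNF of universal sentences.
   pol = polarity; env maps de Bruijn indices to clause variables;
   next = first fresh clause variable.  Every (effectively universal)
   quantifier gets a fresh clause variable; conjunction = union of clause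
   sets, disjunction = pairwise union of clauses (variables are disjoint).
   Only meant for universal sentences (all quantifiers effectively
   universal), which is the case for the outputs of sk^exists. *)
Definition cross {S : sig} (X Y : list (clause S)) : list (clause S) :=
  flat_map (fun c => map (fun d => c ++ d) Y) X.

Fixpoint cnf_aux {S : sig} (pol : bool) (env : list nat) (next : nat)
  (A : form S) : list (clause S) * nat :=
  match A with
  | atom p ts =>
      ([[(pol, APred p (map (rename_t (fun n => nth n env 0)) ts))]], next)
  | eqf t u =>
      ([[(pol, AEq (rename_t (fun n => nth n env 0) t)
                   (rename_t (fun n => nth n env 0) u))]], next)
  | neg A => cnf_aux (negb pol) env next A
  | conj A B =>
      let (X, n1) := cnf_aux pol env next A in
      let (Y, n2) := cnf_aux pol env n1 B in
      ((if pol then X ++ Y else cross X Y), n2)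
  | disj A B =>
      let (X, n1) := cnf_aux pol env next A in
      let (Y, n2) := cnf_aux pol env n1 B in
      ((if pol then cross X Y else X ++ Y), n2)
  | all A | ex A => cnf_aux pol (next :: env) (Datatypes.S next) A
  end.

Definition cnf {S : sig} (A : form S) : list (clause S) :=
  fst (cnf_aux true [] 0 A).

Definition cnf_th {S : sig} (T : theory S) : clause_set S :=
  fun C => exists A, T A /\ In C (cnf A).

Definition rule_system (S : sig) := clause_set S -> list (clause S) -> Prop.

Definition cs_union {S : sig} (D : clause_set S) (B : list (clause S))
  : clause_set S := fun c => D c \/ In c B.

(* a deduction D_0 = C0, D_{i+1} = D_i u B_i with D_i/B_i a rule;
   it is given by the list B_0, ..., B_{n-1} *)
Fixpoint valid_deduction {S : sig} (rs : rule_system S) (D : clause_set S)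
  (Bs : list (list (clause S))) : Prop :=
  match Bs with
  | [] => True
  | B :: Bs' => rs D B /\ valid_deduction rs (cs_union D B) Bs'
  end.

Fixpoint last_set {S : sig} (D : clause_set S) (Bs : list (list (clause S)))
  : clause_set S :=
  match Bs with
  | [] => D
  | B :: Bs' => last_set (cs_union D B) Bs'
  end.

Definition derivable {S : sig} (rs : rule_system S) (C0 : clause_set S)
  (C : clause S) : Prop :=
  exists Bs, valid_deduction rs C0 Bs /\ last_set C0 Bs C.

Definition refutes {S : sig} (rs : rule_system S) (C0 : clause_set S) : Prop :=
  derivable rs C0 [].

Definition sound {S : sig} (rs : rule_system S) : Prop :=
  forall C0 C, derivable rs C0 C ->
    (forall s, In s (syms_clause C) -> lang_cs C0 s) /\ entails C0 C.

Definition refutationally_complete {S : sig} (rs : rule_system S) : Prop :=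
  forall C0, cs_unsat C0 -> refutes rs C0.

Definition IND_R {S : sig} : rule_system S :=
  fun D B => exists phi, over (lang_cs D) phi /\ B = cnf (skE (ind phi)).

Definition sys_union {S : sig} (r1 r2 : rule_system S) : rule_system S :=
  fun D B => r1 D B \/ r2 D B.

(* Main.v *)
From Stdlib Require Import List Arith Lia Classical ClassicalEpsilon FunctionalExtensionality PropExtensionality ProofIrrelevance.
Import ListNotations.
Require Import Defs.
Set Implicit Arguments.

Section Basic.
Variable Sg : sig.

Fixpoint term_ind' (P : term Sg -> Prop) (Hv : forall n, P (var n))
  (Ha : forall f ts, Forall P ts -> P (app f ts)) (t : term Sg) : P t :=
  match t with
  | var n => Hv n
  | app f ts => Ha f ts ((fix go (l : list (term Sg)) : Forall P l :=
       match l with [] => Forall_nil _ | t :: l => Forall_cons _ (@term_ind' P Hv Ha t) (go l) end) ts)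
  end.

Lemma eval_rename (M : structure Sg) r f t :
  eval M r (rename_t f t) = eval M (fun n => r (f n)) t.
Proof.
  induction t using term_ind'; simpl; auto.
  f_equal. rewrite map_map. apply map_ext_in. intros a Ha.
  rewrite Forall_forall in H. auto.
Qed.

Lemma syms_rename f t : syms_t (rename_t f t) = syms_t (S:=Sg) t.
Proof.
  induction t using term_ind'; simpl; auto.
  f_equal. induction ts; simpl; auto. inversion H; subst. rewrite H2, IHts; auto.
Qed.

Lemma bound_in ts t : In t ts -> bound_t (S:=Sg) t <= fold_right Nat.max 0 (map bound_t ts).
Proof.
  induction ts; simpl; intros H; [contradiction|]. destruct H; subst; lia || (specialize (IHts H); lia).
Qed.

Lemma eval_ext_bound (M : structure Sg) r r' t :
  (forall i, i < bound_t t -> r i = r' i) -> eval M r t = eval M r' t.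
Proof.
  induction t using term_ind'; simpl; intros E.
  - apply E; lia.
  - f_equal. apply map_ext_in. intros a Ha. rewrite Forall_forall in H.
    apply H; auto. intros i Hi. apply E. pose proof (bound_in _ _ Ha). lia.
Qed.

Lemma scons_agree {A} (d : A) r r' n :
  (forall i, i < Nat.pred n -> r i = r' i) -> forall i, i < n -> scons d r i = scons d r' i.
Proof. intros E [|i] Hi; simpl; auto. apply E; lia. Qed.

Lemma sat_ext_bound (M : structure Sg) A : forall r r',
  (forall i, i < bound_f A -> r i = r' i) -> (sat M r A <-> sat M r' A).
Proof.
  induction A; simpl; intros r r' E.
  - replace (map (eval M r) l) with (map (eval M r') l); [tauto|].
    apply map_ext_in. intros a Ha. symmetry. apply eval_ext_bound. intros i Hi. apply E.
    pose proof (bound_in _ _ Ha). lia.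
  - rewrite (eval_ext_bound M r r' t), (eval_ext_bound M r r' t0); [tauto| |];
    intros i Hi; apply E; lia.
  - rewrite (IHA r r'); tauto.
  - rewrite (IHA1 r r'), (IHA2 r r'); [tauto| |]; intros i Hi; apply E; lia.
  - rewrite (IHA1 r r'), (IHA2 r r'); [tauto| |]; intros i Hi; apply E; lia.
  - split; intros H d; [rewrite <- (IHA (scons d r) (scons d r'))|rewrite (IHA (scons d r) (scons d r'))]; auto;
    apply scons_agree; auto.
  - split; intros [d H]; exists d; [rewrite <- (IHA (scons d r) (scons d r'))|rewrite (IHA (scons d r) (scons d r'))]; auto;
    apply scons_agree; auto.
Qed.

Lemma sat_ext (M : structure Sg) A r r' :
  (forall i, r i = r' i) -> (sat M r A <-> sat M r' A).
Proof. intros E. apply sat_ext_bound. auto. Qed.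

End Basic.
Section Syn.
Variable Sg : sig.

Lemma fold_max_le (ts : list (term Sg)) m :
  (forall t, In t ts -> bound_t t <= m) -> fold_right Nat.max 0 (map bound_t ts) <= m.
Proof. induction ts; simpl; intros H; [lia|]. pose proof (H a (or_introl eq_refl)).
  assert (fold_right Nat.max 0 (map bound_t ts) <= m) by auto. lia. Qed.

Lemma bound_rename f (t : term Sg) m :
  (forall i, i < bound_t t -> f i < m) -> bound_t (rename_t f t) <= m.
Proof.
  induction t using term_ind'; simpl; intros E.
  - apply E. lia.
  - apply (fold_max_le (map (rename_t f) ts)). intros t Ht.
    apply in_map_iff in Ht. destruct Ht as [u [<- Hu]]. rewrite Forall_forall in H.
    apply H; auto. intros i Hi. apply E. pose proof (bound_in _ _ Hu). lia.
Qed.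

Lemma bound_subst_t s (t : term Sg) m :
  (forall i, i < bound_t t -> bound_t (s i) <= m) -> bound_t (subst_t s t) <= m.
Proof.
  induction t using term_ind'; simpl; intros E.
  - apply E. lia.
  - apply (fold_max_le (map (subst_t s) ts)). intros t Ht.
    apply in_map_iff in Ht. destruct Ht as [u [<- Hu]]. rewrite Forall_forall in H.
    apply H; auto. intros i Hi. apply E. pose proof (bound_in _ _ Hu). lia.
Qed.

Lemma up_sub_bound (s : nat -> term Sg) n m :
  (forall i, i < Nat.pred n -> bound_t (s i) <= m) ->
  forall i, i < n -> bound_t (up_sub s i) <= Datatypes.S m.
Proof.
  intros E [|i] Hi; simpl; [lia|]. apply bound_rename. intros j Hj.
  specialize (E i ltac:(lia)). lia.
Qed.

Lemma bound_subst_f (A : form Sg) : forall s m,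
  (forall i, i < bound_f A -> bound_t (s i) <= m) -> bound_f (subst_f s A) <= m.
Proof.
  induction A; simpl; intros s m E.
  - apply (fold_max_le (map (subst_t s) l)). intros t Ht.
    apply in_map_iff in Ht. destruct Ht as [u [<- Hu]]. apply bound_subst_t.
    intros i Hi. apply E. pose proof (bound_in _ _ Hu). lia.
  - assert (bound_t (subst_t s t) <= m) by (apply bound_subst_t; intros; apply E; lia).
    assert (bound_t (subst_t s t0) <= m) by (apply bound_subst_t; intros; apply E; lia). lia.
  - auto.
  - assert (bound_f (subst_f s A1) <= m) by (apply IHA1; intros; apply E; lia).
    assert (bound_f (subst_f s A2) <= m) by (apply IHA2; intros; apply E; lia). lia.
  - assert (bound_f (subst_f s A1) <= m) by (apply IHA1; intros; apply E; lia).
    assert (bound_f (subst_f s A2) <= m) by (apply IHA2; intros; apply E; lia). lia.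
  - assert (bound_f (subst_f (up_sub s) A) <= Datatypes.S m) by (apply IHA; apply up_sub_bound; auto). lia.
  - assert (bound_f (subst_f (up_sub s) A) <= Datatypes.S m) by (apply IHA; apply up_sub_bound; auto). lia.
Qed.

Lemma bound_skterm (QA : form Sg) : bound_t (skterm QA) <= bound_f QA.
Proof.
  unfold skterm; simpl. apply (fold_max_le (map var (fv QA))). intros t Ht.
  apply in_map_iff in Ht. destruct Ht as [i [<- Hi]]. unfold fv in Hi.
  apply filter_In in Hi. destruct Hi as [Hi _]. apply in_seq in Hi. simpl. lia.
Qed.

Lemma bound_sk (A : form Sg) : forall q s m,
  (forall i, i < bound_f A -> bound_t (s i) <= m) -> bound_f (sk q s A) <= m.
Proof.
  induction A; simpl; intros q s m E.
  - apply (fold_max_le (map (subst_t s) l)). intros t Ht.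
    apply in_map_iff in Ht. destruct Ht as [u [<- Hu]]. apply bound_subst_t.
    intros i Hi. apply E. pose proof (bound_in _ _ Hu). lia.
  - assert (bound_t (subst_t s t) <= m) by (apply bound_subst_t; intros; apply E; lia).
    assert (bound_t (subst_t s t0) <= m) by (apply bound_subst_t; intros; apply E; lia). lia.
  - auto.
  - assert (bound_f (sk q s A1) <= m) by (apply IHA1; intros; apply E; lia).
    assert (bound_f (sk q s A2) <= m) by (apply IHA2; intros; apply E; lia). lia.
  - assert (bound_f (sk q s A1) <= m) by (apply IHA1; intros; apply E; lia).
    assert (bound_f (sk q s A2) <= m) by (apply IHA2; intros; apply E; lia). lia.
  - destruct q.
    + simpl. assert (bound_f (sk true (up_sub s) A) <= Datatypes.S m) by (apply IHA; apply up_sub_bound; auto). lia.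
    + apply IHA. intros [|i] Hi; simpl.
      * eapply Nat.le_trans; [apply bound_skterm|]. apply (bound_subst_f (all A)). auto.
      * apply E. lia.
  - destruct q.
    + apply IHA. intros [|i] Hi; simpl.
      * eapply Nat.le_trans; [apply bound_skterm|]. apply (bound_subst_f (ex A)). auto.
      * apply E. lia.
    + simpl. assert (bound_f (sk false (up_sub s) A) <= Datatypes.S m) by (apply IHA; apply up_sub_bound; auto). lia.
Qed.

Lemma bound_skE_sentence (A : form Sg) : bound_f A = 0 -> bound_f (skE A) = 0.
Proof. intros H. unfold skE. assert (bound_f (sk true var A) <= 0) by (apply bound_sk; intros; lia). lia. Qed.

Lemma bound_iter_all (A : form Sg) k : bound_f (Nat.iter k (@all Sg) A) = bound_f A - k.
Proof. induction k; simpl; [lia|]. rewrite IHk. lia. Qed.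

Lemma ind_sentence (phi : form Sg) : bound_f (ind phi) = 0.
Proof. unfold ind. rewrite bound_iter_all. lia. Qed.

Fixpoint univ (pol : bool) (A : form Sg) : Prop :=
  match A with
  | atom _ _ | eqf _ _ => True
  | neg A => univ (negb pol) A
  | conj A B | disj A B => univ pol A /\ univ pol B
  | all A => pol = true /\ univ pol A
  | ex A => pol = false /\ univ pol A
  end.

Lemma univ_sk (A : form Sg) : forall q s, univ q (sk q s A).
Proof.
  induction A; simpl; intros q s; auto.
  - destruct q; simpl; auto.
  - destruct q; simpl; auto.
Qed.

End Syn.
Section CNF.
Variable Sg : sig.
Variable M : structure Sg.

Lemma in_cross (X Y : list (clause Sg)) c :
  In c (cross X Y) <-> exists c1 d1, In c1 X /\ In d1 Y /\ c = c1 ++ d1.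
Proof.
  unfold cross. rewrite in_flat_map. split.
  - intros [c1 [H1 H2]]. apply in_map_iff in H2. destruct H2 as [d1 [<- H3]]. eauto.
  - intros [c1 [d1 [H1 [H2 ->]]]]. exists c1. split; auto. apply in_map_iff. eauto.
Qed.

Lemma syms_clause_app (c d : clause Sg) : syms_clause (c ++ d) = syms_clause c ++ syms_clause d.
Proof. unfold syms_clause. apply flat_map_app. Qed.

Lemma flat_map_syms_rename f (ts : list (term Sg)) :
  flat_map syms_t (map (rename_t f) ts) = flat_map syms_t ts.
Proof. induction ts; simpl; auto. rewrite syms_rename, IHts. auto. Qed.

Ltac cnf_split HC E1 E2 :=
  match type of HC with
  | context [cnf_aux ?p ?e ?n ?A] =>
    destruct (cnf_aux p e n A) as [?X1 ?n1] eqn:E1;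
    match type of HC with
    | context [cnf_aux ?p' ?e' ?n' ?B] =>
      destruct (cnf_aux p' e' n' B) as [?X2 ?n2] eqn:E2
    end
  end; injection HC; intros; subst.

Lemma cnf_next_le (A : form Sg) : forall pol env next X n,
  cnf_aux pol env next A = (X, n) -> next <= n.
Proof.
  induction A; intros pol env next X n HC; simpl in HC;
   try (injection HC; intros; subst; lia).
  - eauto.
  - cnf_split HC E1 E2. apply IHA1 in E1. apply IHA2 in E2. lia.
  - cnf_split HC E1 E2. apply IHA1 in E1. apply IHA2 in E2. lia.
  - apply IHA in HC. lia.
  - apply IHA in HC. lia.
Qed.

Lemma cross_nonempty (X Y : list (clause Sg)) : X <> [] -> Y <> [] -> cross X Y <> [].
Proof.
  destruct X as [|c X]; [congruence|]. destruct Y as [|d Y]; [congruence|].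
  intros _ _. simpl. discriminate.
Qed.

Lemma cnf_nonempty (A : form Sg) : forall pol env next X n,
  cnf_aux pol env next A = (X, n) -> X <> [].
Proof.
  induction A; intros pol env next X n HC; simpl in HC;
   try (injection HC; intros; subst; discriminate).
  - eauto.
  - cnf_split HC E1 E2. apply IHA1 in E1. apply IHA2 in E2.
    destruct pol; [destruct X1; simpl; congruence | apply cross_nonempty; auto].
  - cnf_split HC E1 E2. apply IHA1 in E1. apply IHA2 in E2.
    destruct pol; [apply cross_nonempty; auto | destruct X1; simpl; congruence].
  - eauto.
  - eauto.
Qed.

Lemma cnf_syms_sub (A : form Sg) : forall pol env next X n,
  cnf_aux pol env next A = (X, n) ->
  forall c s, In c X -> In s (syms_clause c) -> In s (syms_f A).
Proof.
  induction A; intros pol env next X n HC c s Hc Hs; simpl in HC.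
  - injection HC; intros; subst. simpl in Hc. destruct Hc as [<-|[]].
    simpl in Hs. rewrite app_nil_r in Hs. simpl. rewrite flat_map_syms_rename in Hs. auto.
  - injection HC; intros; subst. simpl in Hc. destruct Hc as [<-|[]].
    simpl in Hs. rewrite app_nil_r in Hs. simpl. rewrite !syms_rename in Hs. auto.
  - simpl. eauto.
  - cnf_split HC E1 E2. simpl. apply in_or_app.
    assert (G: forall c, In c (X1 ++ X2) -> In s (syms_clause c) -> In s (syms_f A1) \/ In s (syms_f A2)).
    { intros c' Hc' Hs'. apply in_app_or in Hc'. destruct Hc'; [left; eauto | right; eauto]. }
    destruct pol; [eauto|].
    apply in_cross in Hc. destruct Hc as [c1 [d1 [H1 [H2 ->]]]].
    rewrite syms_clause_app in Hs. apply in_app_or in Hs. destruct Hs; [left; eauto | right; eauto].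
  - cnf_split HC E1 E2. simpl. apply in_or_app.
    assert (G: forall c, In c (X1 ++ X2) -> In s (syms_clause c) -> In s (syms_f A1) \/ In s (syms_f A2)).
    { intros c' Hc' Hs'. apply in_app_or in Hc'. destruct Hc'; [left; eauto | right; eauto]. }
    destruct pol; [|eauto].
    apply in_cross in Hc. destruct Hc as [c1 [d1 [H1 [H2 ->]]]].
    rewrite syms_clause_app in Hs. apply in_app_or in Hs. destruct Hs; [left; eauto | right; eauto].
  - simpl. eauto.
  - simpl. eauto.
Qed.

Lemma cnf_syms_cover (A : form Sg) : forall pol env next X n,
  cnf_aux pol env next A = (X, n) ->
  forall s, In s (syms_f A) -> exists c, In c X /\ In s (syms_clause c).
Proof.
  induction A; intros pol env next X n HC s Hs; simpl in HC.
  - injection HC; intros; subst. exists [(pol, APred p (map (rename_t (fun n => nth n env 0)) l))].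
    split; [left; auto|]. simpl. rewrite app_nil_r, flat_map_syms_rename. auto.
  - injection HC; intros; subst. eexists. split; [left; reflexivity|].
    simpl. rewrite app_nil_r, !syms_rename. auto.
  - simpl in Hs. eauto.
  - pose proof HC as HC'. cnf_split HC E1 E2. simpl in Hs.
    pose proof (cnf_nonempty _ _ _ _ E1) as N1. pose proof (cnf_nonempty _ _ _ _ E2) as N2.
    apply in_app_or in Hs. destruct Hs as [Hs|Hs].
    + destruct (IHA1 _ _ _ _ _ E1 s Hs) as [c [Hc Hsc]].
      destruct pol. { exists c. split; auto. apply in_or_app; auto. }
      destruct X2 as [|d X2]; [congruence|]. exists (c ++ d). split.
      * apply in_cross. exists c, d. simpl; auto.
      * rewrite syms_clause_app. apply in_or_app; auto.
    + destruct (IHA2 _ _ _ _ _ E2 s Hs) as [d [Hd Hsd]].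
      destruct pol. { exists d. split; auto. apply in_or_app; auto. }
      destruct X1 as [|c X1]; [congruence|]. exists (c ++ d). split.
      * apply in_cross. exists c, d. simpl; auto.
      * rewrite syms_clause_app. apply in_or_app; auto.
  - pose proof HC as HC'. cnf_split HC E1 E2. simpl in Hs.
    pose proof (cnf_nonempty _ _ _ _ E1) as N1. pose proof (cnf_nonempty _ _ _ _ E2) as N2.
    apply in_app_or in Hs. destruct Hs as [Hs|Hs].
    + destruct (IHA1 _ _ _ _ _ E1 s Hs) as [c [Hc Hsc]].
      destruct pol. 2:{ exists c. split; auto. apply in_or_app; auto. }
      destruct X2 as [|d X2]; [congruence|]. exists (c ++ d). split.
      * apply in_cross. exists c, d. simpl; auto.
      * rewrite syms_clause_app. apply in_or_app; auto.
    + destruct (IHA2 _ _ _ _ _ E2 s Hs) as [d [Hd Hsd]].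
      destruct pol. 2:{ exists d. split; auto. apply in_or_app; auto. }
      destruct X1 as [|c X1]; [congruence|]. exists (c ++ d). split.
      * apply in_cross. exists c, d. simpl; auto.
      * rewrite syms_clause_app. apply in_or_app; auto.
  - simpl in Hs. eauto.
  - simpl in Hs. eauto.
Qed.

Definition venv (env : list nat) (rho : nat -> dom M) : nat -> dom M :=
  fun i => rho (nth i env 0).

Lemma map_eval_rename rho f (ts : list (term Sg)) :
  map (eval M rho) (map (rename_t f) ts) = map (eval M (fun n => rho (f n))) ts.
Proof. rewrite map_map. apply map_ext. intros. apply eval_rename. Qed.

Lemma venv_cons env rho d :
  forall i, venv (d :: env) rho i = scons (rho d) (venv env rho) i.
Proof. intros [|i]; reflexivity. Qed.

Lemma cnf_sound (A : form Sg) : forall pol env next X n,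
  univ pol A -> cnf_aux pol env next A = (X, n) ->
  forall rho, (if pol then sat M (venv env rho) A else ~ sat M (venv env rho) A) ->
  forall c, In c X -> exists l, In l c /\ sat_lit M rho l.
Proof.
  induction A; intros pol env next X n HU HC rho Hs c Hc; simpl in HC, HU.
  - injection HC; intros; subst. destruct Hc as [<-|[]]. eexists; split; [left; reflexivity|].
    unfold sat_lit; simpl. rewrite map_eval_rename. destruct pol; exact Hs.
  - injection HC; intros; subst. destruct Hc as [<-|[]]. eexists; split; [left; reflexivity|].
    unfold sat_lit; simpl. rewrite !eval_rename. destruct pol; exact Hs.
  - eapply IHA; eauto. destruct pol; simpl in *; auto. apply NNPP. auto.
  - cnf_split HC E1 E2. destruct HU as [HU1 HU2]. destruct pol; simpl in Hs.
    + destruct Hs. apply in_app_or in Hc. destruct Hc; [eapply IHA1|eapply IHA2]; eauto.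
    + apply in_cross in Hc. destruct Hc as [c1 [d1 [H1 [H2 ->]]]].
      apply not_and_or in Hs. destruct Hs as [Hs|Hs].
      * destruct (IHA1 _ _ _ _ _ HU1 E1 rho Hs c1 H1) as [l [? ?]]. exists l. split; auto. apply in_or_app; auto.
      * destruct (IHA2 _ _ _ _ _ HU2 E2 rho Hs d1 H2) as [l [? ?]]. exists l. split; auto. apply in_or_app; auto.
  - cnf_split HC E1 E2. destruct HU as [HU1 HU2]. destruct pol; simpl in Hs.
    + apply in_cross in Hc. destruct Hc as [c1 [d1 [H1 [H2 ->]]]]. destruct Hs as [Hs|Hs].
      * destruct (IHA1 _ _ _ _ _ HU1 E1 rho Hs c1 H1) as [l [? ?]]. exists l. split; auto. apply in_or_app; auto.
      * destruct (IHA2 _ _ _ _ _ HU2 E2 rho Hs d1 H2) as [l [? ?]]. exists l. split; auto. apply in_or_app; auto.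
    + apply not_or_and in Hs. destruct Hs. apply in_app_or in Hc. destruct Hc; [eapply IHA1|eapply IHA2]; eauto.
  - destruct HU as [-> HU]. simpl in Hs. eapply IHA; eauto. simpl.
    rewrite (sat_ext M A _ _ (venv_cons env rho next)). apply Hs.
  - destruct HU as [-> HU]. simpl in Hs. eapply IHA; eauto. simpl.
    rewrite (sat_ext M A _ _ (venv_cons env rho next)). intros H. apply Hs. eauto.
Qed.

End CNF.
Section CNF2.
Variable Sg : sig.
Variable M : structure Sg.

Ltac cnf_split HC E1 E2 :=
  match type of HC with
  | context [cnf_aux ?p ?e ?n ?A] =>
    destruct (cnf_aux p e n A) as [?X1 ?n1] eqn:E1;
    match type of HC with
    | context [cnf_aux ?p' ?e' ?n' ?B] =>
      destruct (cnf_aux p' e' n' B) as [?X2 ?n2] eqn:E2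
    end
  end; injection HC; intros; subst.

Lemma nth_env_lt (env : list nat) next i :
  (forall j, In j env -> j < next) -> i < length env -> nth i env 0 < next.
Proof. intros H Hi. apply H. apply nth_In. auto. Qed.

Lemma venv_agree (env : list nat) next (A : form Sg) (rho rho' : nat -> dom M) :
  (forall j, In j env -> j < next) -> bound_f A <= length env ->
  (forall j, j < next -> rho j = rho' j) ->
  (sat M (venv M env rho) A <-> sat M (venv M env rho') A).
Proof.
  intros H1 H2 H3. apply sat_ext_bound. intros i Hi. unfold venv. apply H3.
  apply nth_env_lt with (1 := H1). lia.
Qed.

Lemma cnf_dep (A : form Sg) : forall pol env next X n,
  cnf_aux pol env next A = (X, n) ->
  (forall j, In j env -> j < next) -> bound_f A <= length env ->
  forall c l, In c X -> In l c -> forall rho rho' : nat -> dom M,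
  (forall j, j < n -> rho j = rho' j) -> (sat_lit M rho l <-> sat_lit M rho' l).
Proof.
  induction A; intros pol env next X n HC Hf Hb c lt Hc Hl rho rho' Ag; simpl in HC, Hb.
  - injection HC; intros; subst. destruct Hc as [<-|[]]. destruct Hl as [<-|[]].
    unfold sat_lit; simpl. rewrite !map_eval_rename.
    replace (map (eval M (fun n0 => rho (nth n0 env 0))) l) with
            (map (eval M (fun n0 => rho' (nth n0 env 0))) l); [tauto|].
    apply map_ext_in. intros t Ht. apply eval_ext_bound. intros i Hi. symmetry. apply Ag.
    pose proof (bound_in _ _ Ht).
    pose proof (@nth_env_lt env _ i Hf ltac:(lia)). lia.
  - injection HC; intros; subst. destruct Hc as [<-|[]]. destruct Hl as [<-|[]].
    unfold sat_lit; simpl. rewrite !eval_rename.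
    rewrite (eval_ext_bound M (fun n0 => rho (nth n0 env 0)) (fun n0 => rho' (nth n0 env 0)) t),
            (eval_ext_bound M (fun n0 => rho (nth n0 env 0)) (fun n0 => rho' (nth n0 env 0)) t0); [tauto| |];
    intros i Hi; apply Ag; pose proof (@nth_env_lt env _ i Hf ltac:(lia)); lia.
  - eauto.
  - cnf_split HC E1 E2.
    pose proof (cnf_next_le _ _ _ _ E1). pose proof (cnf_next_le _ _ _ _ E2).
    assert (Hf2 : forall j, In j env -> j < n1) by (intros j Hj; specialize (Hf j Hj); lia).
    assert (G : In c (X1 ++ X2) -> sat_lit M rho lt <-> sat_lit M rho' lt).
    { intros Hc'. apply in_app_or in Hc'. destruct Hc'.
      - eapply IHA1; eauto; [lia|]. intros; apply Ag; lia.
      - eapply IHA2; eauto. lia. }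
    destruct pol; [auto|]. apply in_cross in Hc. destruct Hc as [c1 [d1 [H1 [H2 ->]]]].
    apply in_app_or in Hl. destruct Hl.
    + eapply IHA1; eauto; [lia|]. intros; apply Ag; lia.
    + eapply IHA2; eauto. lia.
  - cnf_split HC E1 E2.
    pose proof (cnf_next_le _ _ _ _ E1). pose proof (cnf_next_le _ _ _ _ E2).
    assert (Hf2 : forall j, In j env -> j < n1) by (intros j Hj; specialize (Hf j Hj); lia).
    assert (G : In c (X1 ++ X2) -> sat_lit M rho lt <-> sat_lit M rho' lt).
    { intros Hc'. apply in_app_or in Hc'. destruct Hc'.
      - eapply IHA1; eauto; [lia|]. intros; apply Ag; lia.
      - eapply IHA2; eauto. lia. }
    destruct pol; [|auto]. apply in_cross in Hc. destruct Hc as [c1 [d1 [H1 [H2 ->]]]].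
    apply in_app_or in Hl. destruct Hl.
    + eapply IHA1; eauto; [lia|]. intros; apply Ag; lia.
    + eapply IHA2; eauto. lia.
  - eapply IHA; eauto; simpl; [|lia]. intros j [<-|Hj]; [lia|]. specialize (Hf j Hj); lia.
  - eapply IHA; eauto; simpl; [|lia]. intros j [<-|Hj]; [lia|]. specialize (Hf j Hj); lia.
Qed.

Definition clauses_hold (X : list (clause Sg)) (rho : nat -> dom M) :=
  forall c, In c X -> exists l, In l c /\ sat_lit M rho l.

Lemma cross_case (X1 X2 : list (clause Sg)) next n1 (Q1 Q2 : (nat -> dom M) -> Prop) rho :
  (forall rho0, (forall rho', (forall j, j < next -> rho' j = rho0 j) -> clauses_hold X1 rho') -> Q1 rho0) ->
  (forall rho0, (forall rho', (forall j, j < n1 -> rho' j = rho0 j) -> clauses_hold X2 rho') -> Q2 rho0) ->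
  (forall c l, In c X1 -> In l c -> forall rho rho' : nat -> dom M,
     (forall j, j < n1 -> rho j = rho' j) -> (sat_lit M rho l <-> sat_lit M rho' l)) ->
  (forall r1 r2, (forall j, j < next -> r1 j = r2 j) -> Q2 r1 -> Q2 r2) ->
  next <= n1 ->
  (forall rho', (forall j, j < next -> rho' j = rho j) -> clauses_hold (cross X1 X2) rho') ->
  Q1 rho \/ Q2 rho.
Proof.
  intros H1 H2 D Q2i L Hyp. apply NNPP. intros Hn. apply not_or_and in Hn. destruct Hn as [N1 N2].
  assert (W1 : exists rho1, (forall j, j < next -> rho1 j = rho j) /\ ~ clauses_hold X1 rho1).
  { apply NNPP. intros W. apply N1. apply H1. intros rho' Ag. apply NNPP. intros Hc. apply W. eauto. }
  destruct W1 as [rho1 [Ag1 C1]].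
  assert (N2' : ~ Q2 rho1).
  { intros Q. apply N2. apply (Q2i rho1); auto. }
  assert (W2 : exists rho2, (forall j, j < n1 -> rho2 j = rho1 j) /\ ~ clauses_hold X2 rho2).
  { apply NNPP. intros W. apply N2'. apply H2. intros rho' Ag. apply NNPP. intros Hc. apply W. eauto. }
  destruct W2 as [rho2 [Ag2 C2]].
  unfold clauses_hold in C1, C2. apply not_all_ex_not in C1. destruct C1 as [c1 C1].
  apply imply_to_and in C1. destruct C1 as [Hc1 C1].
  apply not_all_ex_not in C2. destruct C2 as [d1 C2].
  apply imply_to_and in C2. destruct C2 as [Hd1 C2].
  assert (Ag3 : forall j, j < next -> rho2 j = rho j) by (intros j Hj; rewrite Ag2 by lia; auto).
  destruct (Hyp rho2 Ag3 (c1 ++ d1)) as [l [Hl Hs]].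
  { apply in_cross. eauto. }
  apply in_app_or in Hl. destruct Hl as [Hl|Hl].
  - apply C1. exists l. split; auto. rewrite (D c1 l Hc1 Hl rho1 rho2); auto.
    intros j Hj. symmetry. auto.
  - apply C2. eauto.
Qed.

Lemma cnf_complete (A : form Sg) : forall pol env next X n,
  univ pol A -> cnf_aux pol env next A = (X, n) ->
  (forall j, In j env -> j < next) -> bound_f A <= length env ->
  forall rho, (forall rho', (forall j, j < next -> rho' j = rho j) -> clauses_hold X rho') ->
  if pol then sat M (venv M env rho) A else ~ sat M (venv M env rho) A.
Proof.
  induction A; intros pol env next X n HU HC Hf Hb rho Hyp; simpl in HC, HU, Hb.
  - injection HC; intros; subst. destruct (Hyp rho (fun j _ => eq_refl) _ (or_introl eq_refl)) as [l0 [[<-|[]] Hs]].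
    unfold sat_lit in Hs; simpl in Hs. rewrite map_eval_rename in Hs. destruct pol; exact Hs.
  - injection HC; intros; subst. destruct (Hyp rho (fun j _ => eq_refl) _ (or_introl eq_refl)) as [l0 [[<-|[]] Hs]].
    unfold sat_lit in Hs; simpl in Hs. rewrite !eval_rename in Hs. destruct pol; exact Hs.
  - specialize (IHA _ _ _ _ _ HU HC Hf Hb rho Hyp). destruct pol; simpl in *; auto.
  - cnf_split HC E1 E2. destruct HU as [HU1 HU2].
    pose proof (cnf_next_le _ _ _ _ E1). pose proof (cnf_next_le _ _ _ _ E2).
    assert (Hf2 : forall j, In j env -> j < n1) by (intros j Hj; specialize (Hf j Hj); lia).
    destruct pol; simpl.
    + split.
      * apply (IHA1 _ _ _ _ _ HU1 E1 Hf ltac:(lia)). intros rho' Ag c Hc. apply (Hyp rho' Ag). apply in_or_app; auto.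
      * apply (IHA2 _ _ _ _ _ HU2 E2 Hf2 ltac:(lia)). intros rho' Ag c Hc. apply (Hyp rho' ltac:(intros; apply Ag; lia)). apply in_or_app; auto.
    + assert (G : ~ sat M (venv M env rho) A1 \/ ~ sat M (venv M env rho) A2).
      { apply (@cross_case X1 X2 next n1 (fun r => ~ sat M (venv M env r) A1) (fun r => ~ sat M (venv M env r) A2) rho).
        - intros r0 Hr0. apply (IHA1 _ _ _ _ _ HU1 E1 Hf ltac:(lia)). auto.
        - intros r0 Hr0. apply (IHA2 _ _ _ _ _ HU2 E2 Hf2 ltac:(lia)). auto.
        - intros c l Hc Hl. eapply cnf_dep; eauto. lia.
        - intros r1 r2 Ag Q. rewrite (@venv_agree env next A2 r2 r1 Hf ltac:(lia)); auto.
          intros j Hj; symmetry; auto.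
        - auto.
        - auto. }
      tauto.
  - cnf_split HC E1 E2. destruct HU as [HU1 HU2].
    pose proof (cnf_next_le _ _ _ _ E1). pose proof (cnf_next_le _ _ _ _ E2).
    assert (Hf2 : forall j, In j env -> j < n1) by (intros j Hj; specialize (Hf j Hj); lia).
    destruct pol; simpl.
    + apply (@cross_case X1 X2 next n1 (fun r => sat M (venv M env r) A1) (fun r => sat M (venv M env r) A2) rho).
        * intros r0 Hr0. apply (IHA1 _ _ _ _ _ HU1 E1 Hf ltac:(lia)). auto.
        * intros r0 Hr0. apply (IHA2 _ _ _ _ _ HU2 E2 Hf2 ltac:(lia)). auto.
        * intros c l Hc Hl. eapply cnf_dep; eauto. lia.
        * intros r1 r2 Ag Q. rewrite (@venv_agree env next A2 r2 r1 Hf ltac:(lia)); auto.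
          intros j Hj; symmetry; auto.
        * auto.
        * auto.
    + intros [G|G].
      * revert G. apply (IHA1 _ _ _ _ _ HU1 E1 Hf ltac:(lia)). intros rho' Ag c Hc. apply (Hyp rho' Ag). apply in_or_app; auto.
      * revert G. apply (IHA2 _ _ _ _ _ HU2 E2 Hf2 ltac:(lia)). intros rho' Ag c Hc. apply (Hyp rho' ltac:(intros; apply Ag; lia)). apply in_or_app; auto.
  - destruct HU as [-> HU]. simpl. intros d.
    set (rd := fun j => if Nat.eqb j next then d else rho j).
    assert (Hf' : forall j, In j (next :: env) -> j < Datatypes.S next)
      by (intros j [<-|Hj]; [lia|specialize (Hf j Hj); lia]).
    specialize (IHA _ _ _ _ _ HU HC Hf' ltac:(simpl; lia) rd).
    simpl in IHA. refine (proj1 (sat_ext_bound M A _ _ _) (IHA _)).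
    + intros [|i] Hi; unfold venv, rd; simpl.
      * rewrite Nat.eqb_refl. auto.
      * pose proof (@nth_env_lt env next i Hf ltac:(lia)).
        destruct (Nat.eqb_spec (nth i env 0) next); [lia|auto].
    + intros rho' Ag. apply Hyp. intros j Hj. rewrite Ag by lia. unfold rd.
      destruct (Nat.eqb_spec j next); [lia|auto].
  - destruct HU as [-> HU]. simpl. intros [d Hd].
    set (rd := fun j => if Nat.eqb j next then d else rho j).
    assert (Hf' : forall j, In j (next :: env) -> j < Datatypes.S next)
      by (intros j [<-|Hj]; [lia|specialize (Hf j Hj); lia]).
    specialize (IHA _ _ _ _ _ HU HC Hf' ltac:(simpl; lia) rd).
    simpl in IHA. apply IHA.
    + intros rho' Ag. apply Hyp. intros j Hj. rewrite Ag by lia. unfold rd.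
      destruct (Nat.eqb_spec j next); [lia|auto].
    + refine (proj2 (sat_ext_bound M A _ _ _) Hd).
      intros [|i] Hi; unfold venv, rd; simpl.
      * rewrite Nat.eqb_refl. auto.
      * pose proof (@nth_env_lt env next i Hf ltac:(lia)).
        destruct (Nat.eqb_spec (nth i env 0) next); [lia|auto].
Qed.

End CNF2.
Section Zorn.
Variable A : Type.
Definition sub (x y : A -> Prop) := forall a, x a -> y a.
Variable P : (A -> Prop) -> Prop.
Hypothesis Pchain : forall C : (A -> Prop) -> Prop, (forall x, C x -> P x) ->
  (forall x y, C x -> C y -> sub x y \/ sub y x) -> P (fun a => exists x, C x /\ x a).
Variable H0 : A -> Prop.
Hypothesis PH0 : P H0.

Lemma sub_antisym x y : sub x y -> sub y x -> x = y.
Proof. intros H1 H2. apply functional_extensionality. intros a. apply propositional_extensionality. split; auto. Qed.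

Definition gz (x : A -> Prop) : A -> Prop :=
  match excluded_middle_informative (exists y, P y /\ sub x y /\ ~ sub y x) with
  | left h => proj1_sig (constructive_indefinite_description _ h)
  | right _ => x
  end.

Lemma gz_ge x : sub x (gz x).
Proof. unfold gz. destruct excluded_middle_informative as [h|h]; [|intros a; auto].
  destruct (constructive_indefinite_description _ h) as [y [? [? ?]]]. simpl. auto. Qed.

Lemma gz_P x : P x -> P (gz x).
Proof. unfold gz. destruct excluded_middle_informative as [h|h]; auto.
  destruct (constructive_indefinite_description _ h) as [y [? [? ?]]]. simpl. auto. Qed.

Lemma gz_max x : sub (gz x) x -> forall y, P y -> sub x y -> sub y x.
Proof. unfold gz. destruct excluded_middle_informative as [h|h].
  - destruct (constructive_indefinite_description _ h) as [y [? [? ?]]]. simpl. intros. contradiction.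
  - intros _ y Py Hxy. apply NNPP. intros N. apply h. eauto. Qed.

Inductive tower : (A -> Prop) -> Prop :=
| tw0 : tower H0
| twS x : tower x -> tower (gz x)
| twU (C : (A -> Prop) -> Prop) : (forall x, C x -> tower x) ->
    tower (fun a => H0 a \/ exists x, C x /\ x a).

Lemma tower_ge x : tower x -> sub H0 x.
Proof. induction 1; intros a Ha; auto. apply gz_ge. auto. Qed.

Definition extreme c := forall x, tower x -> sub x c -> ~ sub c x -> sub (gz x) c.

Lemma Mc_all c : tower c -> extreme c -> forall x, tower x -> sub x c \/ sub (gz c) x.
Proof.
  intros Tc Ec x Tx. induction Tx as [|x Tx IH|C HC IH].
  - left. apply tower_ge; auto.
  - destruct IH as [IH|IH].
    + destruct (classic (sub c x)) as [E|E].
      * right. rewrite (@sub_antisym x c IH E). intros a; auto.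
      * left. apply Ec; auto.
    + right. intros a Ha. apply gz_ge. auto.
  - destruct (classic (forall x, C x -> sub x c)) as [E|E].
    + left. intros a [Ha|[x [Hx Hxa]]]; [apply tower_ge; auto|]. apply (E x); auto.
    + right. apply not_all_ex_not in E. destruct E as [x E]. apply imply_to_and in E. destruct E as [Cx E].
      destruct (IH x Cx) as [I|I]; [contradiction|]. intros a Ha. right. exists x. auto.
Qed.

Lemma all_extreme c : tower c -> extreme c.
Proof.
  induction 1 as [|c Tc IH|C HC IH]; intros x Tx Hs Hn.
  - exfalso. apply Hn. apply tower_ge; auto.
  - destruct (@Mc_all c Tc IH x Tx) as [I|I]; [|contradiction].
    destruct (classic (sub c x)) as [E|E].
    + rewrite (@sub_antisym x c I E). intros a; auto.
    + intros a Ha. apply gz_ge. apply (IH x Tx I E). auto.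
  - assert (W : exists a, (H0 a \/ exists y, C y /\ y a) /\ ~ x a).
    { apply NNPP. intros W. apply Hn. intros a Ha. apply NNPP. intros N. apply W. eauto. }
    destruct W as [a [[Ha|[e [Ce Hea]]] Hxa]].
    + exfalso. apply Hxa. apply tower_ge; auto.
    + destruct (@Mc_all e (HC e Ce) (IH e Ce) x Tx) as [I|I].
      * assert (sub (gz x) e) by (apply (IH e Ce x Tx I); intros N; apply Hxa; auto).
        intros b Hb. right. exists e. auto.
      * exfalso. apply Hxa. apply I. apply gz_ge. auto.
Qed.

Lemma tower_chain x y : tower x -> tower y -> sub x y \/ sub y x.
Proof.
  intros Tx Ty. destruct (@Mc_all y Ty (@all_extreme y Ty) x Tx) as [I|I]; auto.
  right. intros a Ha. apply I. apply gz_ge. auto.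
Qed.

Lemma tower_P x : tower x -> P x.
Proof.
  induction 1 as [|x Tx IH|C HC IH]; auto using gz_P.
  set (C' := fun y => y = H0 \/ C y).
  assert (E : (fun a => H0 a \/ exists x, C x /\ x a) = (fun a => exists x, C' x /\ x a)).
  { apply functional_extensionality. intros a. apply propositional_extensionality. unfold C'. split.
    - intros [Ha|[x [Cx Hx]]]; eauto.
    - intros [x [[->|Cx] Hx]]; eauto. }
  rewrite E. apply Pchain.
  - intros y [->|Cy]; auto.
  - intros y z Hy Hz. apply tower_chain; destruct Hy as [->|Hy]; destruct Hz as [->|Hz]; auto using tw0.
Qed.

Theorem zorn : exists m, P m /\ sub H0 m /\ forall y, P y -> sub m y -> sub y m.
Proof.
  set (m := fun a => H0 a \/ exists x, tower x /\ x a).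
  assert (Tm : tower m) by (apply twU; auto).
  exists m. split; [apply tower_P; auto|]. split; [intros a; unfold m; auto|].
  apply gz_max. intros a Ha. right. exists (gz m). split; auto. apply twS; auto.
Qed.

End Zorn.

Section Ultra.
Variable I : Type.
Variable i0 : I.

Definition fip (H : (I -> Prop) -> Prop) :=
  forall L : list (I -> Prop), (forall X, In X L -> H X) -> exists i, forall X, In X L -> X i.

Lemma fip_chain (C : ((I -> Prop) -> Prop) -> Prop) :
  (forall x, C x -> fip x) -> (forall x y, C x -> C y -> sub x y \/ sub y x) ->
  fip (fun a => exists x, C x /\ x a).
Proof.
  intros HC Ch L HL.
  assert (G : L = [] \/ exists x, C x /\ forall X, In X L -> x X).
  { induction L as [|X L IH]; [auto|]. right.
    destruct (HL X (or_introl eq_refl)) as [x [Cx Xx]].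
    destruct IH as [->|[y [Cy Hy]]]; [intros; apply HL; right; auto| |].
    - exists x. split; auto. intros Z [<-|[]]; auto.
    - destruct (Ch x y Cx Cy) as [S1|S1].
      + exists y. split; auto. intros Z [<-|HZ]; auto.
      + exists x. split; auto. intros Z [<-|HZ]; auto. }
  destruct G as [->|[x [Cx Hx]]].
  - exists i0. intros X [].
  - apply (HC x Cx). auto.
Qed.

Lemma fip_add (m : (I -> Prop) -> Prop) (E : I -> Prop) :
  (forall L, (forall X, In X L -> m X) -> exists i, (forall X, In X L -> X i) /\ E i) ->
  fip (fun X => m X \/ X = E).
Proof.
  intros H L HL.
  assert (G : exists L', (forall X, In X L' -> m X) /\ forall i, (forall X, In X L' -> X i) -> E i -> forall X, In X L -> X i).
  { induction L as [|X L IH].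
    - exists []. split; [intros _ []|]. intros i _ _ _ [].
    - destruct IH as [L' [H1 H2]]; [intros; apply HL; right; auto|].
      destruct (HL X (or_introl eq_refl)) as [mX| ->].
      + exists (X :: L'). split; [intros Z [<-|HZ]; auto|]. {
        intros i Hi Ei Z [<-|HZ]; [apply Hi; left; auto|]. apply H2; auto. intros; apply Hi; right; auto. }
      + exists L'. split; auto. intros i Hi Ei Z [<-|HZ]; auto. apply (H2 i Hi Ei Z HZ). }
  destruct G as [L' [H1 H2]]. destruct (H L' H1) as [i [Hi Ei]]. exists i. intros X HX. apply (H2 i Hi Ei X HX).
Qed.

Theorem ultrafilter (G : (I -> Prop) -> Prop) : fip G ->
  exists U : (I -> Prop) -> Prop,
    (forall X, G X -> U X) /\
    (forall X, U X -> exists i, X i) /\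
    (forall X Y, U X -> U Y -> U (fun i => X i /\ Y i)) /\
    (forall X Y : I -> Prop, U X -> (forall i, X i -> Y i) -> U Y) /\
    (forall X, U X \/ U (fun i => ~ X i)).
Proof.
  intros HG. destruct (@zorn _ fip (@fip_chain) G HG) as [m [Fm [Gm Mx]]].
  assert (Add : forall E, (forall L, (forall X, In X L -> m X) -> exists i, (forall X, In X L -> X i) /\ E i) -> m E).
  { intros E H. apply (Mx (fun X => m X \/ X = E)); [apply fip_add; auto| intros a; auto |]. right; auto. }
  exists m. split; auto. split; [|split; [|split]].
  - intros X HX. destruct (Fm [X]) as [i Hi]; [intros Z [<-|[]]; auto|]. exists i. apply Hi. left; auto.
  - intros X Y HX HY. apply Add. intros L HL. destruct (Fm (X :: Y :: L)) as [i Hi].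
    + intros Z [<-|[<-|HZ]]; auto.
    + exists i. split; [intros; apply Hi; right; right; auto|]. split; apply Hi; simpl; auto.
  - intros X Y HX HXY. apply Add. intros L HL. destruct (Fm (X :: L)) as [i Hi].
    + intros Z [<-|HZ]; auto.
    + exists i. split; [intros; apply Hi; right; auto|]. apply HXY. apply Hi; left; auto.
  - intros X. apply NNPP. intros N. apply not_or_and in N. destruct N as [N1 N2].
    assert (W1 : exists L1, (forall Z, In Z L1 -> m Z) /\ forall i, (forall Z, In Z L1 -> Z i) -> ~ X i).
    { apply NNPP. intros W. apply N1. apply Add. intros L HL. apply NNPP. intros W'. apply W.
      exists L. split; auto. intros i Hi Xi. apply W'. eauto. }
    assert (W2 : exists L2, (forall Z, In Z L2 -> m Z) /\ forall i, (forall Z, In Z L2 -> Z i) -> ~ ~ X i).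
    { apply NNPP. intros W. apply N2. apply Add. intros L HL. apply NNPP. intros W'. apply W.
      exists L. split; auto. intros i Hi Xi. apply W'. eauto. }
    destruct W1 as [L1 [H1 K1]]. destruct W2 as [L2 [H2 K2]].
    destruct (Fm (L1 ++ L2)) as [i Hi].
    + intros Z HZ. apply in_app_or in HZ. destruct HZ; auto.
    + apply (K2 i); [intros; apply Hi; apply in_or_app; auto|]. apply K1. intros; apply Hi; apply in_or_app; auto.
Qed.

End Ultra.
Lemma cid_ext {A : Type} (P Q : A -> Prop) (p : exists x, P x) (q : exists x, Q x) :
  P = Q -> proj1_sig (constructive_indefinite_description P p) = proj1_sig (constructive_indefinite_description Q q).
Proof. intros ->. rewrite (proof_irrelevance _ p q). reflexivity. Qed.

Section UP.
Variable Sg : sig.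
Variable I : Type.
Variable M : I -> structure Sg.
Variable U : (I -> Prop) -> Prop.
Hypothesis U_ne : forall X, U X -> exists i, X i.
Hypothesis U_int : forall X Y, U X -> U Y -> U (fun i => X i /\ Y i).
Hypothesis U_up : forall X Y : I -> Prop, U X -> (forall i, X i -> Y i) -> U Y.
Hypothesis U_ult : forall X, U X \/ U (fun i => ~ X i).

Definition up' {X Y : I -> Prop} := @U_up X Y.
Definition int' {X Y : I -> Prop} := @U_int X Y.
Definition ne' {X : I -> Prop} := @U_ne X.

Lemma U_top : U (fun _ => True).
Proof. destruct (U_ult (fun _ => True)) as [H|H]; auto. apply (up' H). auto. Qed.

Lemma U_all (X : I -> Prop) : (forall i, X i) -> U X.
Proof. intros H. apply (up' U_top). auto. Qed.

Lemma U_or (X Y : I -> Prop) : U (fun i => X i \/ Y i) -> U X \/ U Y.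
Proof.
  intros H. destruct (U_ult X) as [H1|H1]; auto. right.
  apply (up' (int' H H1)). intros i [[?|?] ?]; tauto.
Qed.

Lemma U_false (X : I -> Prop) : U X -> (forall i, X i -> False) -> False.
Proof. intros H1 H2. destruct (ne' H1) as [i Hi]. eauto. Qed.

Definition Pr := forall i, dom (M i).
Definition equ (f g : Pr) := U (fun i => f i = g i).

Lemma equ_refl f : equ f f.
Proof. apply U_all. auto. Qed.

Lemma equ_sym f g : equ f g -> equ g f.
Proof. intros H. apply (up' H). auto. Qed.

Lemma equ_trans f g h : equ f g -> equ g h -> equ f h.
Proof. intros H1 H2. apply (up' (int' H1 H2)). intros i [-> ->]. auto. Qed.

Definition rep (f : Pr) : Pr :=
  proj1_sig (constructive_indefinite_description (fun g => equ g f) (ex_intro (fun g => equ g f) f (equ_refl f))).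

Lemma rep_equ f : equ (rep f) f.
Proof. unfold rep. destruct constructive_indefinite_description. simpl. auto. Qed.

Lemma rep_resp f g : equ f g -> rep f = rep g.
Proof.
  intros H. unfold rep. apply cid_ext. apply functional_extensionality. intros h.
  apply propositional_extensionality. split; intros; eauto using equ_trans, equ_sym.
Qed.

Definition D := { f : Pr | rep f = f }.

Definition cls (f : Pr) : D := exist _ (rep f) (rep_resp (rep_equ f)).

Lemma D_eq (x y : D) : equ (proj1_sig x) (proj1_sig y) -> x = y.
Proof.
  destruct x as [f Hf], y as [g Hg]; simpl. intros H.
  assert (f = g) by (rewrite <- Hf, <- Hg; apply rep_resp; auto). subst g.
  f_equal. apply proof_irrelevance.
Qed.

Definition Mu : structure Sg :=
  {| dom := D;
     dom_inh := cls (fun i => dom_inh (M i));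
     ifun := fun f ds => cls (fun i => ifun (M i) f (map (fun d => proj1_sig d i) ds));
     ipred := fun p ds => U (fun i => ipred (M i) p (map (fun d => proj1_sig d i) ds)) |}.

Definition ri (r : nat -> D) (i : I) : nat -> dom (M i) := fun n => proj1_sig (r n) i.

Lemma U_map (r : nat -> D) (ts : list (term Sg)) :
  Forall (fun t => U (fun i => proj1_sig (eval Mu r t) i = eval (M i) (ri r i) t)) ts ->
  U (fun i => map (fun d : D => proj1_sig d i) (map (eval Mu r) ts) = map (eval (M i) (ri r i)) ts).
Proof.
  induction 1; simpl.
  - apply U_all. auto.
  - apply (up' (int' H IHForall)). intros i [E1 E2]. simpl. f_equal; [exact E1|exact E2].
Qed.

Lemma eval_Mu (r : nat -> D) (t : term Sg) :
  U (fun i => proj1_sig (eval Mu r t) i = eval (M i) (ri r i) t).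
Proof.
  induction t using term_ind'; simpl.
  - apply U_all. reflexivity.
  - apply U_map in H.
    apply (up' (int' (rep_equ (fun i => ifun (M i) f (map (fun d : D => proj1_sig d i) (map (eval Mu r) ts)))) H)).
    intros i [E1 E2]. simpl. etransitivity; [exact E1|]. f_equal. exact E2.
Qed.

Lemma ri_scons (d : D) r i : forall n, ri (scons d r) i n = scons (proj1_sig d i) (ri r i) n.
Proof. intros [|n]; reflexivity. Qed.

Lemma los (A : form Sg) : forall pol r, univ pol A ->
  if pol then U (fun i => sat (M i) (ri r i) A) -> sat Mu r A
  else U (fun i => ~ sat (M i) (ri r i) A) -> ~ sat Mu r A.
Proof.
  induction A; intros pol r HU; simpl in HU |- *.
  - assert (E := @U_map r l (proj2 (Forall_forall _ l) (fun t _ => eval_Mu r t))).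
    destruct pol; intros H.
    + apply (up' (int' H E)). intros i [H1 H2]. refine (eq_rect_r (fun x => ipred (M i) p x) H1 H2).
    + intros H'. apply (U_false (int' (int' H E) H')). intros i [[H1 H2] H3]. apply H1.
      refine (eq_rect _ (fun x => ipred (M i) p x) H3 _ H2).
  - destruct pol; intros H.
    + apply D_eq. apply (up' (int' H (int' (eval_Mu r t) (eval_Mu r t0)))).
      intros i [H1 [H2 H3]]. rewrite H2, H3. auto.
    + intros E. apply (U_false (int' H (int' (eval_Mu r t) (eval_Mu r t0)))).
      intros i [H1 [H2 H3]]. rewrite E in H2. congruence.
  - specialize (IHA (negb pol) r HU). destruct pol; simpl in IHA; intros H.
    + auto.
    + intros N. apply N. apply IHA. apply (up' H). intros i. apply NNPP.
  - destruct HU as [HU1 HU2]. specialize (IHA1 pol r HU1). specialize (IHA2 pol r HU2).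
    destruct pol; intros H.
    + split; [apply IHA1|apply IHA2]; apply (up' H); tauto.
    + assert (H' : U (fun i => ~ sat (M i) (ri r i) A1 \/ ~ sat (M i) (ri r i) A2))
        by (apply (up' H); intros i; apply not_and_or).
      apply U_or in H'. intros [S1 S2]. destruct H'; [apply IHA1 | apply IHA2]; auto.
  - destruct HU as [HU1 HU2]. specialize (IHA1 pol r HU1). specialize (IHA2 pol r HU2).
    destruct pol; intros H.
    + apply U_or in H. destruct H; [left; apply IHA1 | right; apply IHA2]; auto.
    + intros [S1|S1]; [apply IHA1 in S1 | apply IHA2 in S1]; auto; apply (up' H); tauto.
  - destruct HU as [-> HU]. intros H d. apply (IHA true (scons d r) HU).
    apply (up' H). intros i Hi. rewrite (sat_ext (M i) A _ _ (ri_scons d r i)). apply Hi.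
  - destruct HU as [-> HU]. intros H [d Hd]. revert Hd. apply (IHA false (scons d r) HU).
    apply (up' H). intros i Hi N. rewrite (sat_ext (M i) A _ _ (ri_scons d r i)) in N. apply Hi. eauto.
Qed.

End UP.



Section Compact.
Variable Sg : sig.

Theorem compactness (Sigma : theory Sg) :
  (forall A, Sigma A -> univ true A) ->
  (forall F : list (form Sg), (forall A, In A F -> Sigma A) ->
     exists M : structure Sg, forall A, In A F -> forall r, sat M r A) ->
  exists M : structure Sg, model M Sigma.
Proof.
  intros HU HF.
  assert (Hi : forall i : list (form Sg), exists M : structure Sg,
             (forall A, In A i -> Sigma A) -> forall A, In A i -> forall r, sat M r A).
  { intros i. destruct (classic (forall A, In A i -> Sigma A)) as [H|H].
    - destruct (HF i H) as [M HM]. eauto.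
    - destruct (HF [] ltac:(intros _ [])) as [M _]. exists M. intros H'. contradiction. }
  set (Mi := fun i => proj1_sig (constructive_indefinite_description _ (Hi i))).
  assert (HMi : forall i, (forall A, In A i -> Sigma A) -> forall A, In A i -> forall r, sat (Mi i) r A).
  { intros i. unfold Mi. destruct constructive_indefinite_description. simpl. auto. }
  set (Sub := fun i : list (form Sg) => forall A, In A i -> Sigma A).
  set (G := fun X : list (form Sg) -> Prop => X = Sub \/ exists A, Sigma A /\ X = fun i => In A i).
  assert (FG : fip G).
  { intros L HL.
    assert (K : exists i, Sub i /\ forall X, In X L -> X i).
    { induction L as [|X L IH].
      - exists []. split; [intros _ []|intros _ []].
      - destruct IH as [i [Si Hi']]; [intros; apply HL; right; auto|].
        destruct (HL X (or_introl eq_refl)) as [->|[A [SA ->]]].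
        + exists i. split; auto. intros Z [<-|HZ]; [auto|apply Hi'; auto].
        + exists (A :: i). split.
          * intros B [<-|HB]; auto.
          * intros Z [<-|HZ]; [left; auto|].
            destruct (HL Z (or_intror HZ)) as [->|[B [SB ->]]].
            -- intros B [<-|HB]; auto.
            -- right. apply (Hi' _ HZ). }
    destruct K as [i [_ K]]. eauto. }
  destruct (@ultrafilter _ [] G FG) as [U [UG [Une [Uint [Uup Uult]]]]].
  exists (Mu Mi U Uint Uup Uult).
  intros A SA r.
  apply (@los Sg _ Mi U Une Uint Uup Uult A true r (HU A SA)).
  assert (G1 : U Sub) by (apply UG; left; auto).
  assert (G2 : U (fun i => In A i)) by (apply UG; right; exists A; auto).
  apply (Uup _ _ (Uint _ _ G1 G2)).
  intros i [H1 H2]. apply HMi; auto.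
Qed.

End Compact.
Section Main.
Variable Sg : sig.

Lemma cnf_sound_top (M : structure Sg) (A : form Sg) :
  univ true A -> (forall r, sat M r A) -> forall c, In c (cnf A) -> sat_clause M c.
Proof.
  intros HU HS. unfold cnf. destruct (cnf_aux true [] 0 A) as [X n] eqn:E. simpl.
  intros c Hc rho. apply (cnf_sound M A true [] 0 HU E rho); [apply HS|auto].
Qed.

Lemma cnf_complete_top (M : structure Sg) (A : form Sg) :
  univ true A -> bound_f A = 0 -> (forall c, In c (cnf A) -> sat_clause M c) -> forall r, sat M r A.
Proof.
  intros HU HB HC r. unfold cnf in HC. destruct (cnf_aux true [] 0 A) as [X n] eqn:E. simpl in HC.
  pose proof (@cnf_complete Sg M A true [] 0 X n HU E ltac:(intros j [])
                 ltac:(simpl; lia) r) as K.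
  simpl in K. refine (proj1 (sat_ext_bound M A _ _ _) (K _)).
  - intros i Hi. lia.
  - intros rho' _ c Hc. apply HC. auto.
Qed.

Lemma cnf_syms_sub_top (A : form Sg) c s : In c (cnf A) -> In s (syms_clause c) -> In s (syms_f A).
Proof. unfold cnf. destruct (cnf_aux true [] 0 A) as [X n] eqn:E. simpl. apply (cnf_syms_sub A true [] 0 E). Qed.

Lemma cnf_syms_cover_top (A : form Sg) s : In s (syms_f A) -> exists c, In c (cnf A) /\ In s (syms_clause c).
Proof. unfold cnf. destruct (cnf_aux true [] 0 A) as [X n] eqn:E. simpl. apply (cnf_syms_cover A true [] 0 E). Qed.

Lemma SIn_shape (T : theory Sg) : (forall A, T A -> sentence A) ->
  forall k A, SIn k (skE_th T) A -> exists B, bound_f B = 0 /\ A = skE B.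
Proof.
  intros HT. induction k; simpl; intros A HA.
  - destruct HA as [B [HB ->]]. exists B. split; auto. apply HT; auto.
  - destruct HA as [HA|[phi [_ ->]]]; auto. exists (ind phi). split; auto. apply ind_sentence.
Qed.

Lemma SIw_univ (T : theory Sg) : (forall A, T A -> sentence A) ->
  forall A, SIw (skE_th T) A -> univ true A /\ bound_f A = 0.
Proof.
  intros HT A [k HA]. destruct (@SIn_shape T HT k A HA) as [B [HB ->]]. split.
  - apply univ_sk.
  - apply bound_skE_sentence. auto.
Qed.

Lemma last_set_app (D : clause_set Sg) Bs1 Bs2 : last_set D (Bs1 ++ Bs2) = last_set (last_set D Bs1) Bs2.
Proof. revert D; induction Bs1; simpl; auto. Qed.

Lemma valid_app (rs : rule_system Sg) (D : clause_set Sg) Bs1 Bs2 :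
  valid_deduction rs D Bs1 -> valid_deduction rs (last_set D Bs1) Bs2 -> valid_deduction rs D (Bs1 ++ Bs2).
Proof. revert D; induction Bs1; simpl; intros D H1 H2; auto. destruct H1. split; auto. Qed.

Lemma last_set_incl (D : clause_set Sg) Bs c : D c -> last_set D Bs c.
Proof. revert D; induction Bs; simpl; intros D H; auto. apply IHBs. left; auto. Qed.

Lemma last_set_mono (D D' : clause_set Sg) Bs : (forall c, D c -> D' c) -> forall c, last_set D Bs c -> last_set D' Bs c.
Proof.
  revert D D'; induction Bs; simpl; intros D D' H; auto. apply IHBs.
  intros c [Hc|Hc]; [left; auto|right; auto].
Qed.

Lemma valid_IND_mono (D D' : clause_set Sg) Bs : (forall c, D c -> D' c) ->
  valid_deduction IND_R D Bs -> valid_deduction IND_R D' Bs.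
Proof.
  revert D D'; induction Bs; simpl; intros D D' H V; auto. destruct V as [[phi [Hov ->]] V]. split.
  - exists phi. split; auto. intros s Hs. destruct (Hov s Hs) as [C [HC HsC]]. exists C; auto.
  - apply (IHBs (cs_union D (cnf (skE (ind phi))))); auto. intros c [Hc|Hc]; [left; auto|right; auto].
Qed.

Lemma valid_lift (r1 r2 : rule_system Sg) D Bs : (forall D B, r1 D B -> r2 D B) ->
  valid_deduction r1 D Bs -> valid_deduction r2 D Bs.
Proof. revert D; induction Bs; simpl; intros D H V; auto. destruct V. split; auto. Qed.

Lemma combine (C0 : clause_set Sg) {X : Type} (R : X -> clause_set Sg -> Prop)
  (Rmono : forall x (D D' : clause_set Sg), R x D -> (forall c, D c -> D' c) -> R x D') (L : list X) :
  (forall x, In x L -> exists Bs, valid_deduction IND_R C0 Bs /\ R x (last_set C0 Bs)) ->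
  exists Bs, valid_deduction IND_R C0 Bs /\ forall x, In x L -> R x (last_set C0 Bs).
Proof.
  induction L as [|x L IH]; intros H.
  - exists []. split; simpl; auto. intros _ [].
  - destruct (H x (or_introl eq_refl)) as [Bs1 [V1 R1]].
    destruct IH as [Bs2 [V2 R2]]; [intros; apply H; right; auto|].
    exists (Bs1 ++ Bs2). split.
    + apply valid_app; auto. apply (valid_IND_mono C0); auto. intros c Hc. apply last_set_incl. auto.
    + rewrite last_set_app. intros y [<-|Hy].
      * apply (Rmono _ _ _ R1). intros c Hc. apply last_set_incl. auto.
      * apply (Rmono _ _ _ (R2 y Hy)). apply last_set_mono. intros c Hc. apply last_set_incl. auto.
Qed.

Lemma single (T0 : theory Sg) k : forall A, SIn k T0 A ->
  exists Bs, valid_deduction IND_R (cnf_th T0) Bs /\ forall c, In c (cnf A) -> last_set (cnf_th T0) Bs c.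
Proof.
  induction k; simpl; intros A HA.
  - exists []. split; simpl; auto. intros c Hc. exists A. auto.
  - destruct HA as [HA|[phi [Hov ->]]]; auto.
    destruct (combine (cnf_th T0) (fun s D => lang_cs D s)
                (fun s D D' HD HDD' => match HD with ex_intro _ C (Logic.conj HC HsC) => ex_intro _ C (Logic.conj (HDD' C HC) HsC) end)
                (syms_f phi)) as [Bs [V HBs]].
    { intros s Hs. destruct (Hov s Hs) as [A' [HA' HsA']].
      destruct (IHk A' HA') as [Bs [V HB]]. exists Bs. split; auto.
      destruct (cnf_syms_cover_top A' s HsA') as [c [Hc Hsc]]. exists c. auto. }
    exists (Bs ++ [cnf (skE (ind phi))]). split.
    + apply valid_app; auto. simpl. split; auto. exists phi. split; auto.
    + rewrite last_set_app. simpl. intros c Hc. right. auto.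
Qed.

End Main.

Theorem proposition5 (S : sig) (rs : rule_system S) (T : theory S) :
  sound rs ->
  refutationally_complete rs ->
  (forall A, T A -> sentence A) ->
  (refutes (sys_union rs IND_R) (cnf_th (skE_th T)) <->
   inconsistent (SIw (skE_th T))).
Proof.
  intros Hsound Hcompl HT. set (T0 := skE_th T). split.
  - intros [Bs [V HL]] M HM.
    assert (Inv : forall Bs (D : clause_set S), valid_deduction (sys_union rs IND_R) D Bs ->
              cs_model M D -> (exists k, forall s, lang_cs D s -> lang_th (SIn k T0) s) ->
              cs_model M (last_set D Bs)).
    { clear V HL Bs. induction Bs as [|B Bs IH]; simpl; intros D V HMD HLD; auto.
      destruct V as [[HR|HR] V]; apply IH; auto.
      - assert (Der : forall c, In c B -> (forall s, In s (syms_clause c) -> lang_cs D s) /\ entails D c).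
        { intros c HcB. apply Hsound. exists [B]. simpl. split; auto. right; auto. }
        intros c [HcD|HcB]; auto. apply (proj2 (Der c HcB)). auto.
      - destruct HLD as [k Hk].
        assert (Der : forall c, In c B -> (forall s, In s (syms_clause c) -> lang_cs D s))
          by (intros c HcB; apply Hsound; exists [B]; simpl; split; auto; right; auto).
        exists k. intros s [C [[HC|HC] HsC]]; [apply Hk; exists C; auto|]. apply Hk. eapply Der; eauto.
      - destruct HR as [phi [Hov ->]]. destruct HLD as [k Hk].
        assert (HA : SIn (Datatypes.S k) T0 (skE (ind phi))).
        { simpl. right. exists phi. split; auto. intros s Hs'. apply Hk. auto. }
        intros c [HcD|HcB]; auto. apply (cnf_sound_top M (skE (ind phi))); auto.
        + apply univ_sk.
        + apply HM. exists (Datatypes.S k). auto.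
      - destruct HR as [phi [Hov ->]]. destruct HLD as [k Hk].
        assert (HA : SIn (Datatypes.S k) T0 (skE (ind phi))).
        { simpl. right. exists phi. split; auto. intros s Hs'. apply Hk. auto. }
        exists (Datatypes.S k). intros s [C [[HC|HC] HsC]].
        + destruct (Hk s (ex_intro _ C (Logic.conj HC HsC))) as [A [HA' HsA]]. exists A. split; auto. simpl. left. auto.
        + exists (skE (ind phi)). split; auto. eapply cnf_syms_sub_top; eauto. }
    assert (HM0 : cs_model M (last_set (cnf_th T0) Bs)).
    { apply Inv; auto.
      - intros c [A [HA Hc]]. apply (cnf_sound_top M A); auto.
        + destruct HA as [B [_ ->]]. apply univ_sk.
        + apply HM. exists 0. auto.
      - exists 0. intros s [C [[A [HA Hc]] HsC]]. exists A. split; auto. eapply cnf_syms_sub_top; eauto. }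
    destruct (HM0 [] HL (fun _ => dom_inh M)) as [l [[] _]].
  - intros Hinc.
    assert (HF : exists F, (forall A, In A F -> SIw T0 A) /\ forall M : structure S, ~ (forall A, In A F -> forall r, sat M r A)).
    { apply NNPP. intros N.
      destruct (compactness (SIw T0)) as [M HM].
      - intros A HA. apply (@SIw_univ S T HT A HA).
      - intros F HF. apply NNPP. intros N'. apply N. exists F. split; auto.
        intros M HM. apply N'. eauto.
      - apply (Hinc M HM). }
    destruct HF as [F [HF1 HF2]].
    destruct (combine (cnf_th T0) (fun A D => forall c, In c (cnf A) -> D c)
                (fun A D D' HD HDD' c Hc => HDD' c (HD c Hc)) F) as [Bs [V HBs]].
    { intros A HA. destruct (HF1 A HA) as [k Hk]. apply (@single S T0 k A Hk). }
    assert (Uns : cs_unsat (last_set (cnf_th T0) Bs)).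
    { intros M HM. apply (HF2 M). intros A HA r. destruct (@SIw_univ S T HT A (HF1 A HA)) as [HU HB].
      apply cnf_complete_top; auto. intros c Hc. apply HM. apply (HBs A HA c Hc). }
    destruct (Hcompl _ Uns) as [Bs' [V' HL']].
    exists (Bs ++ Bs'). split.
    + apply valid_app.
      * apply (valid_lift IND_R); auto. intros D B H; right; auto.
      * apply (valid_lift rs); auto. intros D B H; left; auto.
    + rewrite last_set_app. auto.
Qed.
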